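(* Let $D(a_0,a_1,a_2;p)=\sum_{k=0}^2\binom{2}{k}p^k(1-p)^{2-k}|p-a_k|$, let $(a_0,a_1,a_2)\in[0,1]^3$ minimize $\max_{p\in[0,1]}D(x_0,x_1,x_2;p)$ over $[0,1]^3$, and let $f(p)=D(a_0,a_1,a_2;p)$. Then $f(0)=f(1)=\|f\|_\infty$, i.e. $\{0,1\}\subset M(f)=\{x\in[0,1]:f(x)=\|f\|_\infty\}$. *)

(* Defs.v *)
From HB Require Import structures.
From mathcomp Require Import all_boot all_order all_algebra.
From mathcomp Require Import all_classical all_reals.
Set Implicit Arguments. Unset Strict Implicit. Unset Printing Implicit Defensive.
Import Order.TTheory GRing.Theory Num.Theory.
Local Open Scope classical_set_scope.
Local Open Scope ring_scope.

Definition unit_itv (R : realType) : set R := [set p : R | 0 <= p <= 1].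
Arguments unit_itv R : clear implicits.

Definition Dfun (R : realType) (a0 a1 a2 p : R) : R :=
  \sum_(k < 3) ('C(2, k))%:R * p ^+ k * (1 - p) ^+ (2 - k)
               * `|p - [:: a0; a1; a2]`_k|.

Definition maxD (R : realType) (a0 a1 a2 : R) : R :=
  sup [set Dfun a0 a1 a2 p | p in unit_itv R].

Definition supnorm01 (R : realType) (f : R -> R) : R :=
  sup [set `|f p| | p in unit_itv R].

(* Main.v *)
Require Import Defs.
From HB Require Import structures.
From mathcomp Require Import all_boot all_order all_algebra.
From mathcomp Require Import all_classical all_reals.
From mathcomp Require Import ring lra.
Import Order.TTheory GRing.Theory Num.Theory.
Set Implicit Arguments. Unset Strict Implicit.
Local Open Scope classical_set_scope.
Local Open Scope ring_scope.

Lemma DfunE (R : realType) (a0 a1 a2 p : R) : Dfun a0 a1 a2 p =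
  (1 - p) ^+ 2 * `|p - a0| + 2 * p * (1 - p) * `|p - a1| + p ^+ 2 * `|p - a2|.
Proof.
rewrite /Dfun !big_ord_recr big_ord0 /= add0r.
rewrite !expr0 !expr1 !mulr1 !mul1r.
by rewrite subn0 (_ : 'C(2, 1) = 2)%N.
Qed.

Definition num (R : realType) (t : R) : R := 2^-1 + t - 2 * t ^+ 2 - 4 * t ^+ 3.

Lemma nabs (R : realType) (x : R) : - x <= `|x|.
Proof. by rewrite -normrN ler_norm. Qed.

Lemma lower (R : realType) (a0 a1 a2 t : R) : 0 <= t <= 2^-1 ->
  num t <= (2^-1 + 2 * t ^+ 2) * (Dfun a0 a1 a2 0 + Dfun a0 a1 a2 1)
    + Dfun a0 a1 a2 (2^-1 + t) + Dfun a0 a1 a2 (2^-1 - t).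
Proof.
move=> /andP[t0 t1].
rewrite !DfunE.
set q := 2^-1 + t; set r := 2^-1 - t.
have h0 := nabs (0 - a0).
have h1 := ler_norm (1 - a2).
have hq0 := ler_wpM2l (sqr_ge0 (1 - q)) (ler_norm (q - a0)).
have hq2 := ler_wpM2l (sqr_ge0 q) (nabs (q - a2)).
have hr0 := ler_wpM2l (sqr_ge0 (1 - r)) (ler_norm (r - a0)).
have hr2 := ler_wpM2l (sqr_ge0 r) (nabs (r - a2)).
have hs : 0 <= 2 * q * (1 - q).
  rewrite /q; nra.
have hq1 := ler_wpM2l hs (ler_norm (q - a1)).
have hr1 := ler_wpM2l hs (nabs (r - a1)).
have hs2 : 0 <= 2^-1 + 2 * t ^+ 2 :> R by have := sqr_ge0 t; lra.
have e : 2 * r * (1 - r) = 2 * q * (1 - q) by rewrite /q /r; field.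
rewrite e.
have H0 := ler_wpM2l hs2 (lerD h0 h1).
rewrite /num; rewrite /q /r in H0 hq0 hq1 hq2 hr0 hr1 hr2 *.
lra.
Qed.

Lemma upper (R : realType) (b : R) : 0 <= b <= 2^-1 ->
  (forall t, 0 <= t <= 2^-1 -> num t <= b * (3 + 4 * t ^+ 2)) ->
  forall p, 0 <= p <= 1 -> Dfun b 2^-1 (1 - b) p <= b.
Proof.
move=> /andP[b0 b1] H p /andP[p0 p1]; rewrite DfunE.
have h2 : (0:R) < 2^-1 by rewrite invr_gt0.
case: (lerP p b) => pb.
  rewrite (ler0_norm (_ : p - 2^-1 <= 0)) ?subr_le0; last by lra.
  rewrite (ler0_norm (_ : p - (1 - b) <= 0)) ?subr_le0; last by lra.
  have := mulr_ge0 p0 b0; lra.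
case: (lerP p 2^-1) => ph.
  have := H (2^-1 - p); rewrite /num => Ht.
  have {Ht} Ht := Ht (ltac:(apply/andP; split; lra)).
  rewrite (ler0_norm (_ : p - (1 - b) <= 0)) ?subr_le0; last by lra.
  lra.
case: (lerP p (1 - b)) => pb'.
  have := H (p - 2^-1); rewrite /num => Ht.
  have {Ht} Ht := Ht (ltac:(apply/andP; split; lra)).
  lra.
have : 0 <= 1 - p by lra.
move=> /mulr_ge0 /(_ b0); lra.
Qed.

Lemma Dfun_bnd (R : realType) (a0 a1 a2 p : R) :
  0 <= a0 <= 1 -> 0 <= a1 <= 1 -> 0 <= a2 <= 1 -> 0 <= p <= 1 ->
  0 <= Dfun a0 a1 a2 p <= 1.
Proof.
move=> /andP[? ?] /andP[? ?] /andP[? ?] /andP[p0 p1]; rewrite DfunE.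
have hs : 0 <= 2 * p * (1 - p) by apply: mulr_ge0; lra.
have n1 : forall a : R, 0 <= a <= 1 -> `|p - a| <= 1.
  move=> a /andP[? ?]; rewrite ler_norml; apply/andP; split; lra.
have h0 := ler_wpM2l (sqr_ge0 (1 - p)) (n1 a0 ltac:(apply/andP; split; lra)).
have h1 := ler_wpM2l hs (n1 a1 ltac:(apply/andP; split; lra)).
have h2 := ler_wpM2l (sqr_ge0 p) (n1 a2 ltac:(apply/andP; split; lra)).
have g0 := mulr_ge0 (sqr_ge0 (1 - p)) (normr_ge0 (p - a0)).
have g1 := mulr_ge0 hs (normr_ge0 (p - a1)).
have g2 := mulr_ge0 (sqr_ge0 p) (normr_ge0 (p - a2)).
apply/andP; split; lra.
Qed.

Lemma alg (R : realType) (n T F q r m : R) : n <= (2^-1 + 2 * T) * F + q + r -> q <= m -> r <= m ->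
  0 <= (2 * m - F) * T -> n <= (m - (2 * m - F) / 6) * (3 + 4 * T).
Proof. move=> *. lra. Qed.

Theorem lemma5p4 (R : realType) (a0 a1 a2 : R) :
  a0 \in unit_itv R -> a1 \in unit_itv R -> a2 \in unit_itv R ->
  (forall x0 x1 x2 : R,
      x0 \in unit_itv R -> x1 \in unit_itv R -> x2 \in unit_itv R ->
      maxD a0 a1 a2 <= maxD x0 x1 x2) ->
  let f := Dfun a0 a1 a2 in
  f 0 = supnorm01 f /\ f 1 = supnorm01 f.
Proof.
rewrite !in_setE /unit_itv /= => ha0 ha1 ha2 Hmin /=.
have h2 : (0:R) < 2^-1 by rewrite invr_gt0.
set S := [set num t / (3 + 4 * t ^+ 2) | t in [set t : R | 0 <= t <= 2^-1]].
have pos : forall t : R, 0 < 3 + 4 * t ^+ 2.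
  by move=> t; have := sqr_ge0 t; lra.
have ubS : ubound S 2^-1.
  move=> _ [t /andP[t0 t1] <-]; rewrite ler_pdivrMr //.
  have := sqr_ge0 t; have := exprn_ge0 3 t0; rewrite /num; lra.
have neS : S !=set0.
  by exists (num 0 / (3 + 4 * 0 ^+ 2)); exists 0 => //=; apply/andP; split; lra.
have hS : has_sup S by split => //; exists 2^-1.
set b := sup S.
have Hb : forall t, 0 <= t <= 2^-1 -> num t <= b * (3 + 4 * t ^+ 2).
  move=> t ht; rewrite -ler_pdivrMr //; apply: sup_upper_bound => //.
  by exists t.
have b0 : 0 <= b by have := Hb 0 ltac:(apply/andP; split; lra); rewrite /num; lra.
have b1 : b <= 2^-1 by apply: ge_sup.
have Hx : maxD b 2^-1 (1 - b) <= b.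
  apply: ge_sup; first by exists (Dfun b 2^-1 (1 - b) 0); exists 0 => //=; apply/andP; split; lra.
  move=> _ [p hp <-]; apply: upper => //; by apply/andP.
have Hm : maxD a0 a1 a2 <= b.
  apply: le_trans Hx; apply: Hmin; rewrite in_setE /=; apply/andP; split; lra.
set m := maxD a0 a1 a2 in Hm *.
have hT : has_sup [set Dfun a0 a1 a2 p | p in unit_itv R].
  split; first by exists (Dfun a0 a1 a2 0); exists 0 => //; rewrite /unit_itv /=; apply/andP; split; lra.
  exists 1 => _ [p hp <-].
  by have /andP[] := Dfun_bnd ha0 ha1 ha2 hp.
have Hf : forall p, 0 <= p <= 1 -> Dfun a0 a1 a2 p <= m.
  by move=> p hp; apply: sup_upper_bound => //; exists p.
have Hsn : supnorm01 (Dfun a0 a1 a2) = m.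
  rewrite /supnorm01 (@eq_imagel _ _ _ _ (Dfun a0 a1 a2)) //.
  move=> p hp; apply: ger0_norm.
  by have /andP[] := Dfun_bnd ha0 ha1 ha2 hp.
rewrite Hsn.
have f0 := Hf 0 ltac:(apply/andP; split; lra).
have f1 := Hf 1 ltac:(apply/andP; split; lra).
have key : 2 * m <= Dfun a0 a1 a2 0 + Dfun a0 a1 a2 1.
  case: (lerP (2 * m) (Dfun a0 a1 a2 0 + Dfun a0 a1 a2 1)) => // hlt.
  exfalso.
  set F := Dfun a0 a1 a2 0 + Dfun a0 a1 a2 1 in hlt.
  have : b <= m - (2 * m - F) / 6.
    apply: ge_sup => // _ [t /andP[t0 t1] <-]; rewrite ler_pdivrMr //.
    have L := lower a0 a1 a2 (ltac:(apply/andP; split; lra) : 0 <= t <= 2^-1).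
    have Q1 := Hf (2^-1 + t) ltac:(apply/andP; split; lra).
    have Q2 := Hf (2^-1 - t) ltac:(apply/andP; split; lra).
    have Q3 : 0 <= (2 * m - F) * t ^+ 2.
      by apply: mulr_ge0 (sqr_ge0 t); rewrite /F; lra.
    exact: (@alg R (num t) (t ^+ 2) F _ _ m L Q1 Q2 Q3).
  lra.
split; apply/eqP; rewrite eq_le; apply/andP; split; lra.
Qed.
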